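(* Let $\mathcal{A}$, $\mathcal{E}=\Omega^1(\mathcal{A})$, the splitting $\mathcal{E}\otimes_{\mathcal{A}}\mathcal{E}=\ker(\wedge)\oplus\mathcal{F}$, $\sigma$ and $\nabla_0$ be as in the context, assume $\mathcal{E}$ is centered and $\sigma(\omega\otimes_{\mathcal{A}}\eta)=\eta\otimes_{\mathcal{A}}\omega$ for all $\omega,\eta\in\mathcal{Z}(\mathcal{E})$. Let $g$ be a bilinear pseudo-Riemannian metric on $\mathcal{E}$ and $\nabla$ a torsionless connection on $\mathcal{E}$ which is compatible with $g$ on $\mathcal{Z}(\mathcal{E})$. Write $\nabla(\eta)=\sum_i\eta_{(0)i}\otimes_{\mathcal{A}}\eta_{(1)i}$ and $\nabla_0(\omega)=\sum_i{}_{(0)}\omega_i\otimes_{\mathcal{A}}{}_{(1)}\omega_i$ with $\eta_{(1)i},{}_{(1)}\omega_i\in\mathcal{Z}(\mathcal{E})$, and abbreviate $g(a\otimes_{\mathcal{A}} x_{(0)})g(b\otimes_{\mathcal{A}} x_{(1)}):=\sum_i g(a\otimes_{\mathcal{A}} x_{(0)i})g(b\otimes_{\mathcal{A}} x_{(1)i})$ and similarly for the other products. Then for all $\omega,\eta,\theta\in\mathcal{Z}(\mathcal{E})$, \begin{align*} 2g(\omega\otimes_{\mathcal{A}}\eta_{(0)})g(\theta\otimes_{\mathcal{A}}\eta_{(1)}) &=g(\omega\otimes_{\mathcal{A}}dg(\eta\otimes_{\mathcal{A}}\theta))-g(\eta\otimes_{\mathcal{A}}dg(\theta\otimes_{\mathcal{A}}\omega))+g(\theta\otimes_{\mathcal{A}}dg(\omega\otimes_{\mathcal{A}}\eta))\\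 &\quad-g(\eta\otimes_{\mathcal{A}}{}_{(0)}\omega)g(\theta\otimes_{\mathcal{A}}{}_{(1)}\omega)+g(\eta\otimes_{\mathcal{A}}{}_{(1)}\omega)g(\theta\otimes_{\mathcal{A}}{}_{(0)}\omega)\\ &\quad+g(\omega\otimes_{\mathcal{A}}{}_{(0)}\eta)g(\theta\otimes_{\mathcal{A}}{}_{(1)}\eta)-g(\omega\otimes_{\mathcal{A}}{}_{(1)}\eta)g(\theta\otimes_{\mathcal{A}}{}_{(0)}\eta)\\ &\quad-g(\eta\otimes_{\mathcal{A}}{}_{(0)}\theta)g(\omega\otimes_{\mathcal{A}}{}_{(1)}\theta)+g(\eta\otimes_{\mathcal{A}}{}_{(1)}\theta)g(\omega\otimes_{\mathcal{A}}{}_{(0)}\theta). \end{align*}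
   Context: $\mathcal{A}$ is a complex algebra with a differential calculus $(\Omega(\mathcal{A}),d)$ (graded, $\Omega^0=\mathcal{A}$, bimodules $\Omega^j$, bimodule product $\wedge$ adding degrees, $d^2=0$, graded Leibniz rule, $\Omega^j$ right-spanned by $da_0\wedge\cdots\wedge da_{j-1}$); $\mathcal{E}=\Omega^1(\mathcal{A})$ is a finitely generated projective right $\mathcal{A}$-module and $\wedge:\mathcal{E}\otimes_{\mathcal{A}}\mathcal{E}\to\Omega^2(\mathcal{A})$ is the induced product. A connection is a $\mathbb{C}$-linear $\nabla:\mathcal{E}\to\mathcal{E}\otimes_{\mathcal{A}}\mathcal{E}$ with $\nabla(\omega a)=\nabla(\omega)a+\omega\otimes_{\mathcal{A}}da$; torsionless means $\wedge\circ\nabla+d=0$. Assume $\mathcal{E}\otimes_{\mathcal{A}}\mathcal{E}=\ker(\wedge)\oplus\mathcal{F}$, $\mathcal{F}$ a right submodule with $Q:=\wedge|_{\mathcal{F}}:\mathcal{F}\to\Omega^2(\mathcal{A})$ a right module isomorphism; $P_{\rm sym}$ is the idempotent with image $\ker\wedge$ and kernel $\mathcal{F}$, $\sigma=2P_{\rm sym}-1$. With an idempotent $p\in M_n(\mathcal{A})$, $p(\mathcal{A}^n)=\mathcal{E}$, $\Phi_j=p(e_j)$, the Grassmann connection is $\nabla^{Gr}(\sum_j\Phi_ja_j)=\sum_j\Phi_j\otimes_{\mathcal{A}}da_j$ and $\nabla_0:=\nabla^{Gr}-Q^{-1}\circ(\wedge\circ\nabla^{Gr}+d)$. $\mathcal{Z}(\mathcal{M})=\{m:am=ma\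 \forall a\}$; $\mathcal{E}$ is centered if $\mathcal{Z}(\mathcal{E})$ right-spans $\mathcal{E}$. A pseudo-Riemannian bilinear metric is an $\mathcal{A}$-bimodule map $g:\mathcal{E}\otimes_{\mathcal{A}}\mathcal{E}\to\mathcal{A}$ with $g\circ\sigma=g$ such that $e\mapsto g(e\otimes_{\mathcal{A}}-)$ is a right module isomorphism $\mathcal{E}\to\mathrm{Hom}_{\mathcal{A}}(\mathcal{E},\mathcal{A})$. $\nabla$ is compatible with $g$ on $\mathcal{Z}(\mathcal{E})$ if for all $\omega,\eta\in\mathcal{Z}(\mathcal{E})$: $(g\otimes_{\mathcal{A}}\mathrm{id})\{\sigma_{23}(\nabla(\omega)\otimes_{\mathcal{A}}\eta)+\omega\otimes_{\mathcal{A}}\nabla(\eta)\}=d(g(\omega\otimes_{\mathcal{A}}\eta))$, where $\sigma_{23}=\mathrm{id}\otimes_{\mathcal{A}}\sigma$ on $\mathcal{E}^{\otimes_{\mathcal{A}}3}$ and $(g\otimes_{\mathcal{A}}\mathrm{id})(x\otimes y\otimes z)=g(x\otimes_{\mathcal{A}}y)z$. *)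

(* Defs.v *)
(* Setting of Theorem 5.5: a (degree <= 2 truncation of a)
   differential calculus over a complex algebra, tensor products over A given
   by their universal property, splitting of E (x)_A E, Grassmann connection. *)
From HB Require Import structures.
From mathcomp Require Import all_boot all_order all_algebra.
From mathcomp Require Import complex Rstruct.
Set Implicit Arguments.
Unset Strict Implicit.
Unset Printing Implicit Defensive.
Import GRing.Theory.
Local Open Scope ring_scope.

Notation Cx := (complex Rdefinitions.R).

Definition additive_fun (M N : zmodType) (f : M -> N) : Prop :=
  forall x y, f (x + y) = f x + f y.

(* A-bimodules over the complex algebra A (C acting through A, the left and
   right C-actions agreeing). *)
Record bimodule (A : algType Cx) := Bimodule {
  bm_car :> zmodType;
  lact : A -> bm_car -> bm_car;
  ract : bm_car -> A -> bm_car;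
  lactDr : forall a x y, lact a (x + y) = lact a x + lact a y;
  lactDl : forall a b x, lact (a + b) x = lact a x + lact b x;
  lact1 : forall x, lact 1 x = x;
  lactM : forall a b x, lact (a * b) x = lact a (lact b x);
  ractDl : forall a x y, ract (x + y) a = ract x a + ract y a;
  ractDr : forall a b x, ract x (a + b) = ract x a + ract x b;
  ract1 : forall x, ract x 1 = x;
  ractM : forall a b x, ract x (a * b) = ract (ract x a) b;
  lractA : forall a b x, ract (lact a x) b = lact a (ract x b);
  scal_central : forall (k : Cx) x, lact (k%:A) x = ract x (k%:A)
}.
Arguments lact {A} M a x : rename.
Arguments ract {A} M x a : rename.

(* A first order differential calculus, up to degree 2:
   Omega^0 = A, Omega^1, Omega^2, d : Omega^0 -> Omega^1 -> Omega^2,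
   wedge : Omega^1 x Omega^1 -> Omega^2. *)
Record calculus (A : algType Cx) := Calculus {
  Om1 : bimodule A;
  Om2 : bimodule A;
  d0 : A -> Om1;
  d1 : Om1 -> Om2;
  wed : Om1 -> Om1 -> Om2;
  wedDl : forall x y z, wed (x + y) z = wed x z + wed y z;
  wedDr : forall x y z, wed x (y + z) = wed x y + wed x z;
  wed_lact : forall a x y, wed (lact Om1 a x) y = lact Om2 a (wed x y);
  wed_mid : forall a x y, wed (ract Om1 x a) y = wed x (lact Om1 a y);
  wed_ract : forall a x y, wed x (ract Om1 y a) = ract Om2 (wed x y) a;
  d0D : forall a b, d0 (a + b) = d0 a + d0 b;
  d0Z : forall (k : Cx) a, d0 (k *: a) = lact Om1 (k%:A) (d0 a);
  d1D : forall x y, d1 (x + y) = d1 x + d1 y;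
  d1Z : forall (k : Cx) x, d1 (lact Om1 (k%:A) x) = lact Om2 (k%:A) (d1 x);
  d0M : forall a b, d0 (a * b) = ract Om1 (d0 a) b + lact Om1 a (d0 b);
  d1_lact : forall a x, d1 (lact Om1 a x) = wed (d0 a) x + lact Om2 a (d1 x);
  d1_ract : forall a x, d1 (ract Om1 x a) = ract Om2 (d1 x) a - wed x (d0 a);
  d1d0 : forall a, d1 (d0 a) = 0;
  span1 : forall x : Om1, exists s : seq (A * A),
      x = \sum_(q <- s) ract Om1 (d0 q.1) q.2;
  span2 : forall y : Om2, exists s : seq (A * A * A),
      y = \sum_(q <- s) ract Om2 (wed (d0 q.1.1) (d0 q.1.2)) q.2
}.
Arguments Om1 {A} c : rename.
Arguments Om2 {A} c : rename.
Arguments d0 {A} c a : rename.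
Arguments d1 {A} c x : rename.
Arguments wed {A} c x y : rename.

(* E (x)_A E, given by its universal property for additive A-balanced maps. *)
Definition balanced2 (A : algType Cx) (E : bimodule A) (M : zmodType)
  (f : E -> E -> M) : Prop :=
  [/\ forall x y z, f (x + y) z = f x z + f y z,
      forall x y z, f x (y + z) = f x y + f x z &
      forall a x y, f (ract E x a) y = f x (lact E a y)].

Record tensor2 (A : algType Cx) (E : bimodule A) := Tensor2 {
  T2 :> zmodType;
  tens2 : E -> E -> T2;
  tens2_bal : balanced2 tens2;
  lift2 : forall M : zmodType, (E -> E -> M) -> T2 -> M;
  lift2_add : forall (M : zmodType) f, @balanced2 A E M f -> additive_fun (lift2 f);
  lift2_tens : forall (M : zmodType) f, @balanced2 A E M f ->
      forall x y, lift2 f (tens2 x y) = f x y;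
  lift2_uniq : forall (M : zmodType) f (h : T2 -> M), additive_fun h ->
      (forall x y, h (tens2 x y) = f x y) -> forall t, h t = lift2 f t
}.
Arguments tens2 {A E} t x y : rename.
Arguments lift2 {A E} t {M} f u : rename.

(* E (x)_A E (x)_A E, given by its universal property. *)
Definition balanced3 (A : algType Cx) (E : bimodule A) (M : zmodType)
  (f : E -> E -> E -> M) : Prop :=
  [/\ forall x x' y z, f (x + x') y z = f x y z + f x' y z,
      forall x y y' z, f x (y + y') z = f x y z + f x y' z,
      forall x y z z', f x y (z + z') = f x y z + f x y z',
      forall a x y z, f (ract E x a) y z = f x (lact E a y) z &
      forall a x y z, f x (ract E y a) z = f x y (lact E a z)].

Record tensor3 (A : algType Cx) (E : bimodule A) := Tensor3 {
  T3 :> zmodType;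
  tens3 : E -> E -> E -> T3;
  tens3_bal : balanced3 tens3;
  lift3 : forall M : zmodType, (E -> E -> E -> M) -> T3 -> M;
  lift3_add : forall (M : zmodType) f, @balanced3 A E M f -> additive_fun (lift3 f);
  lift3_tens : forall (M : zmodType) f, @balanced3 A E M f ->
      forall x y z, lift3 f (tens3 x y z) = f x y z;
  lift3_uniq : forall (M : zmodType) f (h : T3 -> M), additive_fun h ->
      (forall x y z, h (tens3 x y z) = f x y z) -> forall t, h t = lift3 f t
}.
Arguments tens3 {A E} t x y z : rename.
Arguments lift3 {A E} t {M} f u : rename.

Section Ops.
Variables (A : algType Cx) (Om : calculus A).
Local Notation E := (Om1 Om).
Variables (T : tensor2 E) (T3 : tensor3 E).

Definition lact2 (a : A) (t : T) : T := lift2 T (fun x y => tens2 T (lact E a x) y) t.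
Definition ract2 (t : T) (a : A) : T := lift2 T (fun x y => tens2 T x (ract E y a)) t.

Definition wedgeT (t : T) : Om2 Om := lift2 T (wed Om) t.

Definition tensT2E (t : T) (z : E) : T3 := lift2 T (fun x y => tens3 T3 x y z) t.
Definition tensET2 (x : E) (t : T) : T3 := lift2 T (fun y z => tens3 T3 x y z) t.

Definition central (M : bimodule A) (m : M) : Prop := forall a, lact M a m = ract M m a.

Definition centered : Prop :=
  forall x : E, exists s : seq (E * A),
    (forall q, q \in s -> central q.1) /\ x = \sum_(q <- s) ract E q.1 q.2.

(* P_sym = 1 - Q^{-1} o wedge (idempotent with image ker wedge, kernel F),
   sigma = 2 P_sym - 1. *)
Definition Psym (Qinv : Om2 Om -> T) (t : T) : T := t - Qinv (wedgeT t).
Definition sigma (Qinv : Om2 Om -> T) (t : T) : T := Psym Qinv t *+ 2 - t.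

Definition sigma23 (Qinv : Om2 Om -> T) (u : T3) : T3 :=
  lift3 T3 (fun x y z => tensET2 x (sigma Qinv (tens2 T y z))) u.

Definition g_id (g : T -> A) (u : T3) : E :=
  lift3 T3 (fun x y z => lact E (g (tens2 T x y)) z) u.

Definition nablaGr (n : nat) (Phi : 'I_n -> E) (xi : E -> 'I_n -> A) (x : E) : T :=
  \sum_(j < n) tens2 T (Phi j) (d0 Om (xi x j)).

Definition nabla0 (Qinv : Om2 Om -> T) (n : nat) (Phi : 'I_n -> E)
  (xi : E -> 'I_n -> A) (x : E) : T :=
  nablaGr Phi xi x - Qinv (wedgeT (nablaGr Phi xi x) + d1 Om x).

Definition is_connection (nabla : E -> T) : Prop :=
  [/\ additive_fun nabla,
      forall (k : Cx) x, nabla (lact E (k%:A) x) = lact2 (k%:A) (nabla x) &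
      forall x a, nabla (ract E x a) = ract2 (nabla x) a + tens2 T x (d0 Om a)].

Definition torsionless (nabla : E -> T) : Prop :=
  forall x, wedgeT (nabla x) + d1 Om x = 0.

Definition pseudo_riemannian (Qinv : Om2 Om -> T) (g : T -> A) : Prop :=
  [/\ additive_fun g,
      forall a t, g (lact2 a t) = a * g t &
      forall a t, g (ract2 t a) = g t * a] /\
  (forall t, g (sigma Qinv t) = g t) /\
  (* e |-> g (e (x)_A -) is a bijection E -> Hom_A(E, A) *)
  (forall x, (forall y, g (tens2 T x y) = 0) -> x = 0) /\
  (forall phi : E -> A, additive_fun phi -> (forall y a, phi (ract E y a) = phi y * a) ->
        exists x, forall y, g (tens2 T x y) = phi y).

Definition compatible_on_center (Qinv : Om2 Om -> T) (g : T -> A) (nabla : E -> T) : Prop :=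
  forall x y, central x -> central y ->
    g_id g (sigma23 Qinv (tensT2E (nabla x) y) + tensET2 x (nabla y))
    = d0 Om (g (tens2 T x y)).

(* The paper's abbreviation: for x = sum_i x_(0)i (x)_A x_(1)i given by the
   list s of pairs (x_(0)i, x_(1)i),
   gprod g s u v = sum_i g(u (x)_A x_(0)i) g(v (x)_A x_(1)i). *)
Definition gprod (g : T -> A) (s : seq (E * E)) (u v : E) : A :=
  \sum_(q <- s) g (tens2 T u q.1) * g (tens2 T v q.2).

Definition central_decomp (t : T) (s : seq (E * E)) : Prop :=
  t = \sum_(q <- s) tens2 T q.1 q.2 /\ (forall q, q \in s -> central q.2).

End Ops.

(* Main.v *)
Require Import Defs.
From HB Require Import structures.
From mathcomp Require Import all_boot all_order all_algebra.
From mathcomp Require Import complex Rstruct ssrAC.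
Set Implicit Arguments.
Unset Strict Implicit.
Unset Printing Implicit Defensive.
Import GRing.Theory.
Local Open Scope ring_scope.

Section Add.
Variables (M N : zmodType) (f : M -> N) (Hf : additive_fun f).
Lemma ad0 : f 0 = 0.
Proof. have h := Hf 0 0; rewrite addr0 in h. by apply: (addrI (f 0)); rewrite addr0 -h. Qed.
Lemma adN x : f (- x) = - f x.
Proof. apply: (addrI (f x)); by rewrite -Hf !subrr ad0. Qed.
Lemma adB x y : f (x - y) = f x - f y.
Proof. by rewrite Hf adN. Qed.
Lemma adMn x k : f (x *+ k) = f x *+ k.
Proof. elim: k => [|k IH]; first by rewrite !mulr0n ad0. by rewrite !mulrS Hf IH. Qed.
Lemma adsum (I : Type) (s : seq I) (F : I -> M) : f (\sum_(i <- s) F i) = \sum_(i <- s) f (F i).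
Proof. exact: (big_morph f Hf ad0). Qed.
End Add.

Lemma linfin (V : zmodType) (n1 n2 n3 n4 n5 n6 z1 z2 z3 z4 z5 z6 d1 d2 d3 : V) :
 n1 + n2 = d1 -> n3 + n4 = d2 -> n5 + n6 = d3 ->
 n1 - z1 = n6 - z6 -> n2 - z2 = n3 - z3 -> n4 - z4 = n5 - z5 ->
 n2 *+ 2 = d2 - d3 + d1 - z1 + z6 + z2 - z3 - z4 + z5.
Proof.
move=> <- <- <- /eqP H1 /eqP H2 /eqP H3.
move: H1; rewrite subr_eq => /eqP ->.
move: H2; rewrite eq_sym subr_eq => /eqP ->.
move: H3; rewrite eq_sym subr_eq => /eqP ->.
rewrite !opprD !opprK !addrA mulr2n.
apply/eqP; rewrite -subr_eq0; apply/eqP.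
rewrite !opprD !opprK !addrA.
rewrite [LHS](@GRing.add V).[ACl ((1*3)*(2*14)*(4*17)*(5*18)*(6*7)*(8*19)*(9*20)*(10*11)*(12*16)*(13*15))].
by rewrite !subrr !addNr !addr0.
Qed.

Lemma adcomp (M N P : zmodType) (f : N -> P) (h : M -> N) :
  additive_fun f -> additive_fun h -> additive_fun (fun x => f (h x)).
Proof. by move=> Hf Hh x y; rewrite Hh Hf. Qed.
Lemma adsubf (M N : zmodType) (f h : M -> N) :
  additive_fun f -> additive_fun h -> additive_fun (fun x => f x - h x).
Proof. by move=> Hf Hh x y; rewrite Hf Hh opprD addrACA. Qed.
Lemma adm2 (M N : zmodType) (f : M -> N) :
  additive_fun f -> additive_fun (fun x => f x *+ 2).
Proof. by move=> Hf x y; rewrite Hf mulrnDl. Qed.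
Lemma adid (M : zmodType) : additive_fun (fun x : M => x).
Proof. by []. Qed.

Section Main.
Variables (A : algType Cx) (Om : calculus A) (T : tensor2 (Om1 Om)) (T3 : tensor3 (Om1 Om)).
Local Notation E := (Om1 Om).
Variables (F : T -> Prop) (Qinv : Om2 Om -> T).
Hypothesis HF0 : F 0.
Hypothesis HFD : forall t u, F t -> F u -> F (t + u).
Hypothesis HFr : forall t a, F t -> F (ract2 t a).
Hypothesis HQinvF : forall w, F (Qinv w).
Hypothesis HQinv : forall w, wedgeT (Qinv w) = w.
Hypothesis HFker : forall t, F t -> wedgeT t = 0 -> t = 0.
Hypothesis Hcentered : centered Om.
Hypothesis Hflip : forall x y, central x -> central y ->
     sigma Qinv (tens2 T x y) = tens2 T y x.
Variable g : T -> A.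
Hypothesis Hg : pseudo_riemannian Qinv g.

Lemma tD1 x x' y : tens2 T (x + x') y = tens2 T x y + tens2 T x' y.
Proof. by case: (tens2_bal T). Qed.
Lemma tD2 x y y' : tens2 T x (y + y') = tens2 T x y + tens2 T x y'.
Proof. by case: (tens2_bal T). Qed.
Lemma tbal a x y : tens2 T (ract E x a) y = tens2 T x (lact E a y).
Proof. by case: (tens2_bal T). Qed.
Lemma tadd1 y : additive_fun (fun x => tens2 T x y).
Proof. by move=> ??; rewrite tD1. Qed.
Lemma tadd2 x : additive_fun (fun y => tens2 T x y).
Proof. by move=> ??; rewrite tD2. Qed.

Lemma ext2 (M : zmodType) (h1 h2 : T -> M) : additive_fun h1 -> additive_fun h2 ->
  (forall x y, h1 (tens2 T x y) = h2 (tens2 T x y)) -> forall t, h1 t = h2 t.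
Proof.
move=> a1 a2 H t.
rewrite (lift2_uniq a1 (f := fun x y => h1 (tens2 T x y)) (fun x y => erefl)).
by rewrite (lift2_uniq a2 (f := fun x y => h1 (tens2 T x y)) (fun x y => esym (H x y))).
Qed.

Lemma ract0 (M : bimodule A) (x : M) : ract M x 0 = 0.
Proof. have h := ractDr 0 0 x; rewrite addr0 in h. by apply: (addrI (ract M x 0)); rewrite addr0 -h. Qed.
Lemma ractN1 (M : bimodule A) (x : M) : ract M x (-1) = - x.
Proof. have h := ractDr 1 (-1) x; rewrite subrr ract0 ract1 in h. by apply: (addrI x); rewrite -h subrr. Qed.

Lemma bal_r a : balanced2 (fun x y => tens2 T x (ract E y a)).
Proof. split=> [x y z|x y z|b x y]; first by rewrite tD1. by rewrite ractDl tD2. by rewrite tbal lractA. Qed.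
Lemma bal_l a : balanced2 (fun x y => tens2 T (lact E a x) y).
Proof. split=> [x y z|x y z|b x y]; first by rewrite lactDr tD1. by rewrite tD2. by rewrite -lractA tbal. Qed.
Lemma ract2T x y a : ract2 (tens2 T x y) a = tens2 T x (ract E y a).
Proof. exact: (lift2_tens T (bal_r a)). Qed.
Lemma lact2T x y a : lact2 a (tens2 T x y) = tens2 T (lact E a x) y.
Proof. exact: (lift2_tens T (bal_l a)). Qed.
Lemma r2add a : additive_fun (fun t : T => ract2 (T:=T) t a).
Proof. exact: (lift2_add (bal_r a)). Qed.
Lemma l2add a : additive_fun (fun t : T => lact2 (T:=T) a t).
Proof. exact: (lift2_add (bal_l a)). Qed.

Lemma bal_w : balanced2 (wed Om).
Proof. split; [exact: wedDl|exact: wedDr|exact: wed_mid]. Qed.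
Lemma wadd : additive_fun (fun t : T => wedgeT (T:=T) t).
Proof. exact: (lift2_add bal_w). Qed.
Lemma wT x y : wedgeT (tens2 T x y) = wed Om x y.
Proof. exact: (lift2_tens T bal_w). Qed.
Lemma w_r (t : T) a : wedgeT (ract2 t a) = ract (Om2 Om) (wedgeT t) a.
Proof.
apply: (ext2 (h1 := fun t : T => wedgeT (ract2 t a)) (h2 := fun t => ract (Om2 Om) (wedgeT t) a)).
- exact: (adcomp wadd (r2add a)).
- exact: (adcomp (fun x y => ractDl a x y) wadd).
- by move=> x y; rewrite ract2T !wT wed_ract.
Qed.

Lemma ract2N1 (t : T) : ract2 t (-1) = - t.
Proof.
apply: (ext2 (h1 := fun t : T => ract2 t (-1)) (h2 := fun t : T => - t)) => //.
- exact: r2add.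
- by move=> x y; rewrite opprD.
- by move=> x y; rewrite ract2T ractN1 (adN (tadd2 x)).
Qed.

Lemma F_sub (t u : T) : F t -> F u -> F (t - u).
Proof. by move=> Ht Hu; rewrite -ract2N1; apply: HFD => //; apply: HFr. Qed.

Lemma Qinv0 : Qinv 0 = 0.
Proof. by apply: HFker; rewrite ?HQinv. Qed.
Lemma QinvD a b : Qinv (a + b) = Qinv a + Qinv b.
Proof.
apply/eqP; rewrite -subr_eq0; apply/eqP; apply: HFker.
  by apply: F_sub => //; apply: HFD.
by rewrite (adB wadd) wadd !HQinv subrr.
Qed.
Lemma QinvR w a : Qinv (ract (Om2 Om) w a) = ract2 (Qinv w) a.
Proof.
apply/eqP; rewrite -subr_eq0; apply/eqP; apply: HFker.
  by apply: F_sub => //; apply: HFr.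
by rewrite (adB wadd) w_r !HQinv subrr.
Qed.
Lemma Qadd : additive_fun Qinv.
Proof. exact: QinvD. Qed.

Lemma sg_add : additive_fun (sigma Qinv).
Proof.
rewrite /sigma /Psym.
apply: (adsubf (f := fun t : T => (t - Qinv (wedgeT t)) *+ 2)) => //.
apply: adm2; apply: adsubf => //; exact: (adcomp Qadd wadd).
Qed.
Lemma sg_r (t : T) a : sigma Qinv (ract2 t a) = ract2 (sigma Qinv t) a.
Proof.
rewrite /sigma /Psym w_r QinvR.
by rewrite (adB (r2add a)) (adMn (r2add a)) (adB (r2add a)).
Qed.


Lemma tdecomp (sx sy : seq (E * A)) :
  (forall q, q \in sy -> central q.1) ->
  tens2 T (\sum_(q <- sx) ract E q.1 q.2) (\sum_(r <- sy) ract E r.1 r.2)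
  = \sum_(q <- sx) \sum_(r <- sy) ract2 (tens2 T q.1 r.1) (q.2 * r.2).
Proof.
move=> Hc; rewrite (adsum (tadd1 _)); apply: eq_bigr => q _.
rewrite (adsum (tadd2 _)); apply: eq_big_seq => r Hr.
by rewrite ract2T tbal -lractA (Hc r Hr) -ractM.
Qed.

Lemma ext_central (M : zmodType) (h1 h2 : T -> M) : additive_fun h1 -> additive_fun h2 ->
  (forall z z' c, central z -> central z' ->
     h1 (ract2 (tens2 T z z') c) = h2 (ract2 (tens2 T z z') c)) ->
  forall t, h1 t = h2 t.
Proof.
move=> a1 a2 H; apply: ext2 => // x y.
have [sx [Hsx ->]] := Hcentered x; have [sy [Hsy ->]] := Hcentered y.
rewrite tdecomp // (adsum a1) (adsum a2); apply: eq_big_seq => q Hq.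
rewrite (adsum a1) (adsum a2); apply: eq_big_seq => r Hr.
by apply: H; [apply: Hsx | apply: Hsy].
Qed.

Lemma LC z z' a c : central z -> central z' ->
  lact2 a (ract2 (tens2 T z z') c) = ract2 (tens2 T z z') (a * c).
Proof.
move=> Hz Hz'.
by rewrite !ract2T lact2T Hz tbal -lractA Hz' -ractM.
Qed.

Lemma sg_l a (t : T) : sigma Qinv (lact2 a t) = lact2 a (sigma Qinv t).
Proof.
apply: (ext_central (h1 := fun t : T => sigma Qinv (lact2 a t))
                    (h2 := fun t : T => lact2 a (sigma Qinv t))).
- exact: (adcomp sg_add (l2add a)).
- exact: (adcomp (l2add a) sg_add).
- move=> z z' c Hz Hz'.
  by rewrite LC // sg_r Hflip // sg_r Hflip // LC.
Qed.

Lemma gadd : additive_fun g.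
Proof. by case: Hg => [[]]. Qed.
Lemma gl a t : g (lact2 a t) = a * g t.
Proof. by case: Hg => [[]]. Qed.
Lemma gr a t : g (ract2 t a) = g t * a.
Proof. by case: Hg => [[]]. Qed.
Lemma gs t : g (sigma Qinv t) = g t.
Proof. by case: Hg => _ []. Qed.

Lemma gT_r x y a : g (tens2 T x (ract E y a)) = g (tens2 T x y) * a.
Proof. by rewrite -ract2T gr. Qed.
Lemma gT_l x y a : g (tens2 T (lact E a x) y) = a * g (tens2 T x y).
Proof. by rewrite -lact2T gl. Qed.
Lemma gc_l c y a : central c -> g (tens2 T c (lact E a y)) = a * g (tens2 T c y).
Proof. by move=> Hc; rewrite -tbal -Hc gT_l. Qed.
Lemma gsym x y : central x -> central y -> g (tens2 T x y) = g (tens2 T y x).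
Proof. by move=> Hx Hy; rewrite -gs Hflip. Qed.
Lemma gcent b z a : central b -> central z -> a * g (tens2 T b z) = g (tens2 T b z) * a.
Proof. by move=> Hb Hz; rewrite -gT_l Hb tbal Hz gT_r. Qed.

Definition Kf b c x y := g (tens2 T b x) * g (tens2 T c y).
Definition K b c (t : T) := lift2 T (Kf b c) t.

Lemma balK b c : central c -> balanced2 (Kf b c).
Proof.
move=> Hc; rewrite /Kf; split=> [x y z|x y z|a x y].
- by rewrite tD2 gadd mulrDl.
- by rewrite tD2 gadd mulrDr.
- by rewrite gT_r gc_l // mulrA.
Qed.

Lemma Kadd b c : central c -> additive_fun (K b c).
Proof. by move=> Hc; apply: lift2_add; apply: balK. Qed.
Lemma KT b c x y : central c -> K b c (tens2 T x y) = g (tens2 T b x) * g (tens2 T c y).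
Proof. by move=> Hc; rewrite /K (lift2_tens T (balK b Hc)). Qed.
Lemma K_r b c (t : T) a : central c -> K b c (ract2 t a) = K b c t * a.
Proof.
move=> Hc.
apply: (ext2 (h1 := fun t : T => K b c (ract2 t a)) (h2 := fun t : T => K b c t * a)).
- exact: (adcomp (Kadd b Hc) (r2add a)).
- by move=> x y; rewrite (Kadd b Hc) mulrDl.
- by move=> x y; rewrite ract2T !KT // gT_r mulrA.
Qed.

Lemma Ksg b c (t : T) : central b -> central c -> K b c (sigma Qinv t) = K c b t.
Proof.
move=> Hb Hc.
apply: (ext_central (h1 := fun t : T => K b c (sigma Qinv t)) (h2 := K c b)).
- exact: (adcomp (Kadd b Hc) sg_add).
- exact: Kadd.
- move=> z z' c0 Hz Hz'.
  rewrite sg_r Hflip // !K_r // !KT //.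
  by rewrite (gcent (g (tens2 T c z)) Hb Hz').
Qed.

Lemma gprodK (s : seq (E * E)) t b c : central c ->
  t = \sum_(q <- s) tens2 T q.1 q.2 -> gprod g s b c = K b c t.
Proof.
move=> Hc ->; rewrite /gprod (adsum (Kadd b Hc)); apply: eq_bigr => q _.
by rewrite KT.
Qed.

Lemma gprodKs (s : seq (E * E)) t b c : central b -> central c ->
  (forall q, q \in s -> central q.2) ->
  t = \sum_(q <- s) tens2 T q.1 q.2 ->
  gprod g (map (fun q => (q.2, q.1)) s) b c = K c b t.
Proof.
move=> Hb Hc Hs ->; rewrite /gprod big_map (adsum (Kadd c Hb)).
apply: eq_big_seq => q Hq /=.
by rewrite KT // (gcent (g (tens2 T c q.1)) Hb (Hs q Hq)).
Qed.

Lemma bal_TE z : balanced2 (fun x y => tens3 T3 x y z).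
Proof. by case: (tens3_bal T3) => D1 D2 D3 B1 B2; split. Qed.
Lemma bal_ET x : balanced2 (fun y z => tens3 T3 x y z).
Proof. by case: (tens3_bal T3) => D1 D2 D3 B1 B2; split. Qed.
Lemma tETadd x : additive_fun (tensET2 T3 x (T:=T)).
Proof. exact: (lift2_add (bal_ET x)). Qed.
Lemma tTEadd z : additive_fun (fun t : T => tensT2E T3 t z).
Proof. exact: (lift2_add (bal_TE z)). Qed.
Lemma tETT x y z : tensET2 T3 x (tens2 T y z) = tens3 T3 x y z.
Proof. exact: (lift2_tens T (bal_ET x)). Qed.
Lemma tTET x y z : tensT2E T3 (tens2 T x y) z = tens3 T3 x y z.
Proof. exact: (lift2_tens T (bal_TE z)). Qed.

Lemma tET_D1 x x' (t : T) : tensET2 T3 (x + x') t = tensET2 T3 x t + tensET2 T3 x' t.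
Proof.
apply: (ext2 (h1 := fun t : T => tensET2 T3 (x + x') t)
             (h2 := fun t : T => tensET2 T3 x t + tensET2 T3 x' t)).
- exact: tETadd.
- by move=> u v; rewrite !tETadd addrACA.
- move=> y z; rewrite !tETT; by case: (tens3_bal T3).
Qed.
Lemma tET_l x a (t : T) : tensET2 T3 (ract E x a) t = tensET2 T3 x (lact2 a t).
Proof.
apply: (ext2 (h1 := fun t : T => tensET2 T3 (ract E x a) t)
             (h2 := fun t : T => tensET2 T3 x (lact2 a t))).
- exact: tETadd.
- exact: (adcomp (tETadd x) (l2add a)).
- move=> y z; rewrite lact2T !tETT; by case: (tens3_bal T3).
Qed.

Lemma bal_sig : balanced3 (fun x y z => tensET2 T3 x (sigma Qinv (tens2 T y z))).
Proof.
split.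
- by move=> x x' y z; rewrite tET_D1.
- by move=> x y y' z; rewrite tD1 sg_add tETadd.
- by move=> x y z z'; rewrite tD2 sg_add tETadd.
- by move=> a x y z; rewrite tET_l -sg_l lact2T.
- by move=> a x y z; rewrite tbal.
Qed.

Lemma bal_gid : balanced3 (fun x y z => lact E (g (tens2 T x y)) z).
Proof.
split.
- by move=> x x' y z; rewrite tD1 gadd lactDl.
- by move=> x y y' z; rewrite tD2 gadd lactDl.
- by move=> x y z z'; rewrite lactDr.
- by move=> a x y z; rewrite tbal.
- by move=> a x y z; rewrite gT_r lactM.
Qed.

Lemma gid_add : additive_fun (g_id (T3:=T3) g).
Proof. exact: (lift3_add bal_gid). Qed.
Lemma s23_add : additive_fun (sigma23 (T3:=T3) Qinv).
Proof. exact: (lift3_add bal_sig). Qed.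
Lemma Gc_add c : additive_fun (fun v => g (tens2 T c v)).
Proof. by move=> u v; rewrite tD2 gadd. Qed.

Lemma compA y c (t : T) : central y -> central c ->
  g (tens2 T c (g_id g (sigma23 Qinv (tensT2E T3 t y)))) = K y c t.
Proof.
move=> Hy Hc.
apply: (ext_central (h1 := fun t : T => g (tens2 T c (g_id g (sigma23 Qinv (tensT2E T3 t y)))))
                    (h2 := K y c)).
- exact: (adcomp (Gc_add c) (adcomp gid_add (adcomp s23_add (tTEadd y)))).
- exact: Kadd.
- move=> z z' c0 Hz Hz'.
  rewrite ract2T tTET /sigma23 (lift3_tens T3 bal_sig).
  rewrite tbal Hy -ract2T sg_r Hflip // ract2T tETT /g_id (lift3_tens T3 bal_gid).
  by rewrite gc_l // !gT_r KT // gT_r (gsym Hz Hy).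
Qed.

Lemma compB c x (t : T) : central c ->
  g (tens2 T c (g_id g (tensET2 T3 x t))) = K x c t.
Proof.
move=> Hc.
apply: (ext2 (h1 := fun t : T => g (tens2 T c (g_id g (tensET2 T3 x t)))) (h2 := K x c)).
- exact: (adcomp (Gc_add c) (adcomp gid_add (tETadd x))).
- exact: Kadd.
- move=> y z; rewrite tETT /g_id (lift3_tens T3 bal_gid).
  by rewrite gc_l // KT.
Qed.

Lemma compat (nabla : E -> T) x y c :
  compatible_on_center T3 Qinv g nabla -> central x -> central y -> central c ->
  K y c (nabla x) + K x c (nabla y) = g (tens2 T c (d0 Om (g (tens2 T x y)))).
Proof.
move=> Hcomp Hx Hy Hc; rewrite -(Hcomp x y Hx Hy).
by rewrite gid_add (Gc_add c) compA // compB.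
Qed.

Lemma Ssym (nabla : E -> T) (n : nat) (Phi : 'I_n -> E) (xi : E -> 'I_n -> A) x b c :
  torsionless nabla -> central b -> central c ->
  K b c (nabla x) - K b c (nabla0 Qinv Phi xi x)
  = K c b (nabla x) - K c b (nabla0 Qinv Phi xi x).
Proof.
move=> Htl Hb Hc.
rewrite -(adB (Kadd b Hc)) -(adB (Kadd c Hb)).
set L := nabla x - _.
have wL : wedgeT L = 0.
  rewrite /L /nabla0 !(adB wadd) HQinv.
  by rewrite opprB [X in _ + X]addrAC subrr add0r; exact: Htl x.
have sL : sigma Qinv L = L by rewrite /sigma /Psym wL Qinv0 subr0 mulr2n addrK.
by rewrite -{1}sL Ksg.
Qed.

Lemma main_sec (nabla : E -> T) (n : nat) (Phi : 'I_n -> E) (xi : E -> 'I_n -> A)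
  (Htl : torsionless nabla) (Hcomp : compatible_on_center T3 Qinv g nabla)
  (w e th : E) (Hw : central w) (He : central e) (Hth : central th)
  (sne sw se sth : seq (E * E))
  (Hsne : central_decomp (nabla e) sne)
  (Hsw : central_decomp (nabla0 Qinv Phi xi w) sw)
  (Hse : central_decomp (nabla0 Qinv Phi xi e) se)
  (Hsth : central_decomp (nabla0 Qinv Phi xi th) sth) :
  gprod g sne w th *+ 2 =
    g (tens2 T w (d0 Om (g (tens2 T e th))))
  - g (tens2 T e (d0 Om (g (tens2 T th w))))
  + g (tens2 T th (d0 Om (g (tens2 T w e))))
  - gprod g sw e th + gprod g (map (fun q => (q.2, q.1)) sw) e th
  + gprod g se w th - gprod g (map (fun q => (q.2, q.1)) se) w th
  - gprod g sth e w + gprod g (map (fun q => (q.2, q.1)) sth) e w.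
Proof.
case: Hsne => Hne _; case: Hsw => Hw1 Hw2; case: Hse => He1 He2; case: Hsth => Ht1 Ht2.
rewrite (gprodK w Hth Hne) (gprodK e Hth Hw1) (gprodKs He Hth Hw2 Hw1).
rewrite (gprodK w Hth He1) (gprodKs Hw Hth He2 He1).
rewrite (gprodK e Hw Ht1) (gprodKs He Hw Ht2 Ht1).
apply: linfin.
- exact: (compat Hcomp Hw He Hth).
- exact: (compat Hcomp He Hth Hw).
- exact: (compat Hcomp Hth Hw He).
- exact: (Ssym Phi xi w Htl He Hth).
- exact: (Ssym Phi xi e Htl Hw Hth).
- exact: (Ssym Phi xi th Htl He Hw).
Qed.

End Main.

Theorem theorem5p5
  (A : algType Cx) (Om : calculus A)
  (T : tensor2 (Om1 Om)) (T3 : tensor3 (Om1 Om))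
  (* E (x)_A E = ker(wedge) (+) F, F a right submodule, Q = wedge|_F : F -> Omega^2
     a right module isomorphism with inverse Qinv *)
  (F : T -> Prop) (Qinv : Om2 Om -> T)
  (HF0 : F 0) (HFD : forall t u, F t -> F u -> F (t + u))
  (HFr : forall t a, F t -> F (ract2 t a))
  (HQinvF : forall w, F (Qinv w)) (HQinv : forall w, wedgeT (Qinv w) = w)
  (HFker : forall t, F t -> wedgeT t = 0 -> t = 0)
  (* E finitely generated projective: E ~ p A^n via xi, Phi_j = p(e_j) *)
  (n : nat) (p : 'M[A]_n) (Phi : 'I_n -> Om1 Om) (xi : Om1 Om -> 'I_n -> A)
  (Hp : p *m p = p)
  (Hxi_add : forall x y j, xi (x + y) j = xi x j + xi y j)
  (Hxi_r : forall x a j, xi (ract (Om1 Om) x a) j = xi x j * a)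
  (Hxi_rec : forall x, x = \sum_(j < n) ract (Om1 Om) (Phi j) (xi x j))
  (HxiPhi : forall j k, xi (Phi j) k = p k j)
  (* E centered, sigma is the flip on central elements *)
  (Hcentered : centered Om)
  (Hflip : forall x y, central x -> central y ->
     sigma Qinv (tens2 T x y) = tens2 T y x)
  (* pseudo-Riemannian bilinear metric g, torsionless connection nabla
     compatible with g on Z(E) *)
  (g : T -> A) (Hg : pseudo_riemannian Qinv g)
  (nabla : Om1 Om -> T) (Hconn : is_connection nabla) (Htl : torsionless nabla)
  (Hcomp : compatible_on_center T3 Qinv g nabla)
  (w e th : Om1 Om) (Hw : central w) (He : central e) (Hth : central th)
  (sne sw se sth : seq (Om1 Om * Om1 Om))
  (Hsne : central_decomp (nabla e) sne)
  (Hsw : central_decomp (nabla0 Qinv Phi xi w) sw)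
  (Hse : central_decomp (nabla0 Qinv Phi xi e) se)
  (Hsth : central_decomp (nabla0 Qinv Phi xi th) sth) :
  gprod g sne w th *+ 2 =
    g (tens2 T w (d0 Om (g (tens2 T e th))))
  - g (tens2 T e (d0 Om (g (tens2 T th w))))
  + g (tens2 T th (d0 Om (g (tens2 T w e))))
  - gprod g sw e th + gprod g (map (fun q => (q.2, q.1)) sw) e th
  + gprod g se w th - gprod g (map (fun q => (q.2, q.1)) se) w th
  - gprod g sth e w + gprod g (map (fun q => (q.2, q.1)) sth) e w.
Proof.
exact: (main_sec HFD HFr HQinvF HQinv HFker Hcentered Hflip Hg Htl Hcomp Hw He Hth Hsne Hsw Hse Hsth).
Qed.
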